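(* Let $\mathcal N$ be a network and $T\ge1$. For every $k\ge1$, every element of $\mathcal P_k^*$ is a path of length $k$ in $\mathcal G_k$.
   Context: A network is a triple $\mathcal N=(\mathcal L,\mathcal I,D_{\mathcal L})$ where $\mathcal L$ is a finite nonempty set of links, each $\mathcal I(l)$ is a collection of nonempty subsets of $\mathcal L$, and $D_{\mathcal L}$ assigns an integer $D_{\mathcal L}(l,l')$ to every pair with $l'\in\phi$ for some $\phi\in\mathcal I(l)$. A schedule is a map $S:\mathcal L\times\mathbb Z\to\{0,1\}$; $S(l,t)$ has a collision if there is $\phi\in\mathcal I(l)$ with $S(l',t+D_{\mathcal L}(l,l'))=1$ for all $l'\in\phi$; $S$ is collision free if no $(l,t)$ with $S(l,t)=1$ has a collision. $S[T,k]$ is the $|\mathcal L|\times T$ binary matrix with $S[T,k](l,j)=S(l,kT+j)$. The scheduling graph $(\mathcal M_T,\mathcal E_T)$ has vertex set $\mathcal M_T$ = all $|\mathcal L|\times T$ binary matrices $A$ with $A=S[T,0]$ for some collision-free $S$, and edge set $\mathcal E_T$ = all pairs $(A,B)$ with $A=S[T,0]$, $B=S[T,1]$ for some collision-free $S$. A path of length $k$ is a sequence $(A_0,\dots,A_k)$ with $(A_i,A_{i+1})\in\mathcal E_T$ for all $i$. Sequences of matrices of equal length are compared entrywise: $(A_0,\dots,A_k)\succcurlyeq(B_0,\dots,B_k)$ iff $A_i\succcurlyeq B_i$ entrywise for all $i$; $\succ$ means $\succcurlyeq$ and $\neq$. $\mathcal P_k^*$ is the set of paths of length $k$ in $(\mathcal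 M_T,\mathcal E_T)$ not strictly dominated ($\prec$) by any other path of length $k$. $\mathcal E^*$ is the set of maximal elements of $\mathcal E_T$ under this order on pairs; $\mathcal M_L^*=\{B:(B,B')\in\mathcal E^*\text{ for some }B'\}$, $\mathcal M_R^*=\{B:(B',B)\in\mathcal E^*\text{ for some }B'\}$. $A\wedge B$ is the entrywise AND of binary matrices, and $\mathcal V=\{B\wedge B': B\in\mathcal M_R^*, B'\in\mathcal M_L^*\}$. Define recursively $\mathcal U'_0=\mathcal E^*$ and, for $k\ge2$ (with $\mathcal U'_{k-2}$ already defined): $\mathcal F_k=\{(A,B\wedge B',C):(A,B)\in\mathcal U'_{k-2},(B',C)\in\mathcal E^*\}$; $\mathcal F_k^*=\{(A,B,C)\in\mathcal F_k:\text{there is no }(A,B',C)\in\mathcal F_k\text{ with }B'\succ B\}$; $\mathcal U_{k-2}=\{(A,B):(A,B,C)\in\mathcal F_k^*\text{ for some }C\}$; $\mathcal U'_{k-1}=\{(B,C):(A,B,C)\in\mathcal F_k^*\text{ for some }A\}$. A sequence $(P_0,\dots,P_k)$ is a path of length $k$ in $\mathcal G_k$ if: for $k=1$, $(P_0,P_1)\in\mathcal E^*$; for $k\ge2$, $P_0\in\mathcal M_L^*$, $P_1,\dots,P_{k-1}\in\mathcal V$, $P_k\in\mathcal M_R^*$, $(P_i,P_{i+1})\in\mathcal U_i$ for $0\le i\le k-2$, and $(P_{k-1},P_k)\in\mathcal U'_{k-1}$. *)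

(* Defs.v *)
From mathcomp Require Import all_boot all_order all_algebra.
Set Implicit Arguments. Unset Strict Implicit. Unset Printing Implicit Defensive.
Import GRing.Theory.
Local Open Scope ring_scope.

(* A network (L, I, D): links form a finite type [L]; [I l] is a collection
   of (nonempty) subsets of links; [D l l'] is an integer delay (only its
   values on pairs with l' in some phi in I l are ever used). *)
Section Scheduling.
Variables (L : finType) (I : L -> {set {set L}}) (D : L -> L -> int) (T : nat).

Definition schedule := L -> int -> bool.

Definition collision (S : schedule) (l : L) (t : int) : Prop :=
  exists2 phi, phi \in I l & forall l', l' \in phi -> S l' (t + D l l').

Definition collision_free (S : schedule) : Prop :=
  forall l t, S l t -> ~ collision S l t.

Definition mat := {ffun L * 'I_T -> bool}.

Definition window (S : schedule) (k : int) : mat :=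
  [ffun x => S x.1 (k * (T%:Z) + (nat_of_ord x.2)%:Z)].

Definition M_T (A : mat) : Prop :=
  exists S, collision_free S /\ A = window S 0.
Definition E_T (A B : mat) : Prop :=
  exists S, [/\ collision_free S, A = window S 0 & B = window S 1].

Definition mle (A B : mat) : Prop := forall x, A x -> B x.
Definition mlt (A B : mat) : Prop := mle A B /\ A <> B.
Definition mand (A B : mat) : mat := [ffun x => A x && B x].

(* paths of length k: sequences P_0..P_k, represented as functions nat -> mat
   of which only indices 0..k are relevant *)
Definition is_path (k : nat) (P : nat -> mat) : Prop :=
  forall i, (i < k)%N -> E_T (P i) (P i.+1).
Definition seq_le (k : nat) (P Q : nat -> mat) : Prop :=
  forall i, (i <= k)%N -> mle (P i) (Q i).
Definition seq_lt (k : nat) (P Q : nat -> mat) : Prop :=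
  seq_le k P Q /\ exists2 i, (i <= k)%N & P i <> Q i.

Definition Pstar (k : nat) (P : nat -> mat) : Prop :=
  is_path k P /\ ~ exists Q, is_path k Q /\ seq_lt k P Q.

Definition pair_lt (A B A' B' : mat) : Prop :=
  mle A A' /\ mle B B' /\ (A, B) <> (A', B').
Definition Estar (A B : mat) : Prop :=
  E_T A B /\ ~ exists A' B', E_T A' B' /\ pair_lt A B A' B'.

Definition ML_star (B : mat) : Prop := exists B', Estar B B'.
Definition MR_star (B : mat) : Prop := exists B', Estar B' B.
Definition Vset (P : mat) : Prop :=
  exists B B', [/\ MR_star B, ML_star B' & P = mand B B'].

(* F_k built from U'_{k-2} *)
Definition F_of (U : mat -> mat -> Prop) (A B C : mat) : Prop :=
  exists B1 B2, [/\ U A B1, Estar B2 C & B = mand B1 B2].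
Definition Fstar_of (U : mat -> mat -> Prop) (A B C : mat) : Prop :=
  F_of U A B C /\ ~ exists B', F_of U A B' C /\ mlt B B'.

(* Uprime n = U'_n ; U'_0 = E^*, U'_{k-1} from F_k^* (k >= 2) *)
Fixpoint Uprime (n : nat) : mat -> mat -> Prop :=
  match n with
  | 0 => Estar
  | n'.+1 => fun B C => exists A, Fstar_of (Uprime n') A B C
  end.
(* Useq n = U_n, obtained from F_{n+2}^* *)
Definition Useq (n : nat) (A B : mat) : Prop :=
  exists C, Fstar_of (Uprime n) A B C.

Definition path_G (k : nat) (P : nat -> mat) : Prop :=
  if k == 1%N then Estar (P 0%N) (P 1%N)
  else [/\ ML_star (P 0%N),
           forall i, (1 <= i)%N -> (i <= k.-1)%N -> Vset (P i),
           MR_star (P k),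
           forall i, (i <= k - 2)%N -> Useq i (P i) (P i.+1)
         & Uprime k.-1 (P k.-1) (P k)].

End Scheduling.

(* Main.v *)
Require Import Defs.
From mathcomp Require Import all_boot all_order all_algebra.
From mathcomp Require Import zify.
From Stdlib Require Import Classical.
Set Implicit Arguments. Unset Strict Implicit.
Import GRing.Theory.

Lemma maxex (X : Type) (Rle Rlt : X -> X -> Prop) (f : X -> nat) (N : nat)
 (Htr : forall x y z, Rle x y -> Rle y z -> Rle x z)
 (Hrefl : forall x, Rle x x)
 (Hlt : forall x y, Rlt x y -> Rle x y) (Hf : forall x y, Rlt x y -> (f x < f y)%N)
 (HN : forall x, (f x <= N)%N)
 (Q : X -> Prop) x : Q x -> exists y, [/\ Q y, Rle x y & ~ exists z, Q z /\ Rlt y z].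
Proof.
suff H : forall n x, (N - f x <= n)%N -> Q x ->
   exists y, [/\ Q y, Rle x y & ~ exists z, Q z /\ Rlt y z] by apply: H (leqnn _).
elim=> [|n IH] {}x hn Qx.
- exists x; split; [exact: Qx|exact: Hrefl|]. move=> -[z [_ hz]]. have := Hf _ _ hz; have := HN z. lia.
- case: (classic (exists z, Q z /\ Rlt x z)) => [[z [Qz hz]]|hno]; last by exists x; split; [exact: Qx|exact: Hrefl|].
  have hz' : (N - f z <= n)%N by have := Hf _ _ hz; have := HN z; lia.
  have [y [Qy hzy hy]] := IH z hz' Qz.
  exists y; split=> //; exact: Htr (Hlt _ _ hz) hzy.
Qed.

Section H.
Variables (L : finType) (I : L -> {set {set L}}) (D : L -> L -> int) (T : nat).
Local Notation M := (mat L T).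

Definition cnt (A : M) := #|[set x | A x]|.

Lemma cnt_le (A B : M) : mle A B -> (cnt A <= cnt B)%N.
Proof. move=> h; apply: subset_leq_card; apply/subsetP=> x; rewrite !inE; exact: h. Qed.

Lemma cnt_lt (A B : M) : mlt A B -> (cnt A < cnt B)%N.
Proof.
move=> [h hne]; apply: proper_card; rewrite properE; apply/andP; split.
  apply/subsetP=> x; rewrite !inE; exact: h.
apply/negP=> /subsetP hs; apply: hne; apply/ffunP=> x; apply/idP/idP; first exact: h.
move=> Bx; have := hs x; rewrite !inE; by apply.
Qed.

Lemma cnt_bd (A : M) : (cnt A <= #|{: L * 'I_T}|)%N.
Proof. exact: max_card. Qed.

Lemma mle_refl (A : M) : mle A A. Proof. by move=> x. Qed.
Lemma mle_trans (A B C : M) : mle A B -> mle B C -> mle A C.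
Proof. by move=> h1 h2 x /h1 /h2. Qed.
Lemma mand_l (A B : M) : mle (mand A B) A.
Proof. by move=> x; rewrite ffunE => /andP[]. Qed.
Lemma mand_r (A B : M) : mle (mand A B) B.
Proof. by move=> x; rewrite ffunE => /andP[]. Qed.

Lemma E_down (A B A' B' : M) : E_T I D A B -> mle A' A -> mle B' B -> E_T I D A' B'.
Proof.
case=> S [cf eA eB] hA hB; subst A B.
pose g l (t:int) := ~~ [exists j : 'I_T, (t == Posz (nat_of_ord j)) && ~~ A' (l, j)]
   && ~~ [exists j : 'I_T, (t == (Posz T + Posz (nat_of_ord j))%R) && ~~ B' (l, j)].
exists (fun l t => S l t && g l t); split.
- move=> l t /andP[St _] [phi phiI hphi]; apply: (cf l t St); exists phi => // l' /hphi /andP[] //.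
- apply/ffunP=> -[l j]; rewrite ffunE /= mul0r add0r.
  case hAj: (A' (l,j)).
  + have := hA (l,j) hAj; rewrite ffunE /= mul0r add0r => ->; rewrite /g /=.
    apply/esym/andP; split; apply/negP => /existsP [j' /andP [h nb]].
    * rewrite eqz_nat in h; have e : j = j' by apply/val_inj/eqP.
      by rewrite -e hAj in nb.
    * rewrite -PoszD eqz_nat in h; have := ltn_ord j; move/eqP: h; lia.
  + apply/esym/negbTE; rewrite negb_and /g; apply/orP; right; rewrite negb_and negbK.
    by apply/orP; left; apply/existsP; exists j; rewrite eqxx hAj.
- apply/ffunP=> -[l j]; rewrite ffunE /= mul1r.
  case hBj: (B' (l,j)).
  + have := hB (l,j) hBj; rewrite ffunE /= mul1r => ->; rewrite /g /=.
    apply/esym/andP; split; apply/negP => /existsP [j' /andP [h nb]].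
    * rewrite -PoszD eqz_nat in h; have := ltn_ord j'; move/eqP: h; lia.
    * rewrite -!PoszD eqz_nat in h; have e : j = j'.
        apply/val_inj/eqP; move/eqP: h => h /=; apply/eqP; lia.
      by rewrite -e hBj in nb.
  + apply/esym/negbTE; rewrite negb_and /g; apply/orP; right; rewrite negb_and !negbK.
    by apply/orP; right; apply/existsP; exists j; rewrite eqxx hBj.
Qed.

Lemma Estar_E (A B : M) : Estar I D A B -> E_T I D A B. Proof. by case. Qed.

Lemma Uprime_E n (A B : M) : Uprime I D n A B -> E_T I D A B.
Proof.
case: n => [|n] /=; first by case.
move=> [A0 [[B1 [B2 [_ hE ->]]] _]].
exact: E_down (Estar_E hE) (@mand_r _ _) (@mle_refl _).
Qed.

Lemma max_edge (A B : M) : E_T I D A B ->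
  exists A' B', [/\ Estar I D A' B', mle A A' & mle B B'].
Proof.
move=> hE.
have [y [Qy [h1 h2] hno]] := @maxex (M * M)
  (fun p q => mle p.1 q.1 /\ mle p.2 q.2) (fun p q => pair_lt p.1 p.2 q.1 q.2)
  (fun p => cnt p.1 + cnt p.2) (2 * #|{: L * 'I_T}|)
  ltac:(by move=> ??? [??] [??]; split; apply: mle_trans; eassumption)
  ltac:(by move=> ?; split; apply: mle_refl)
  ltac:(by move=> ?? [? [? _]])
  ltac:(move=> [a b] [a' b'] /= [ha [hb hne]];
        have := cnt_le ha; have := cnt_le hb;
        case: (eqVneq a a') => [ea|na];
        [ have : b <> b' by move=> eb; apply: hne; rewrite ea eb
        | have : a <> a' by apply/eqP ];
        [ move=> nb; have := cnt_lt (conj hb nb) | move=> na'; have := cnt_lt (conj ha na')];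
        lia)
  ltac:(move=> p; have := cnt_bd p.1; have := cnt_bd p.2; lia)
  (fun p => E_T I D p.1 p.2) (A, B) hE.
exists y.1, y.2; split=> //; split=> // -[A' [B' [hE' hlt]]].
by apply: hno; exists (A', B').
Qed.

Definition upd (P : nat -> M) i (N : M) := fun j => if j == i then N else P j.

Lemma Pstar_upd k P i (N : M) : Pstar I D k P -> (i <= k)%N -> mle (P i) N ->
  is_path I D k (upd P i N) -> N = P i.
Proof.
move=> [_ hno] hi hle hp. case: (eqVneq N (P i)) => // hne; exfalso.
apply: hno; exists (upd P i N); split=> //; split.
- move=> j _; rewrite /upd; case: eqP => [->|_] //; exact: mle_refl.
- exists i => //; rewrite /upd eqxx => h; by rewrite h eqxx in hne.
Qed.

Lemma path_upd k P i (N : M) : is_path I D k P -> ((0 < i)%N -> E_T I D (P i.-1) N) ->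
  ((i < k)%N -> E_T I D N (P i.+1)) -> is_path I D k (upd P i N).
Proof.
move=> hp h1 h2 j hj; rewrite /upd.
case: (eqVneq j i) => [ej|hji].
  subst j; have -> : (i.+1 == i) = false by apply/eqP; lia.
  exact: h2.
case: (eqVneq j.+1 i) => [hj1|hj1].
  subst i; exact: h1.
exact: hp.
Qed.

End H.

Theorem lemma7 (L : finType) (I : L -> {set {set L}}) (D : L -> L -> int)
    (T : nat)
    (HL : (0 < #|L|)%N)
    (HI : forall l phi, phi \in I l -> phi != set0)
    (HT : (1 <= T)%N) :
  forall (k : nat), (1 <= k)%N ->
  forall P : nat -> mat L T, Pstar I D k P -> path_G I D k P.
Proof.
move=> k hk P HP.
have [hpath _] := HP.
rewrite /path_G; case: eqP => [k1|k1].
  subst k. have [A' [B' [hE h0 h1]]] := max_edge (hpath 0%N isT).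
  have e0 : A' = P 0%N.
    apply: (Pstar_upd HP) => //; apply: path_upd => // _.
    exact: E_down (Estar_E hE) (@mle_refl _ _ _) h1.
  have e1 : B' = P 1%N.
    apply: (Pstar_upd HP) => //; apply: path_upd => // _.
    by rewrite -e0; exact: Estar_E hE.
  by rewrite -e0 -e1.
have k2 : (2 <= k)%N by lia.
have [A' [B' [hE h0 h1]]] := max_edge (hpath 0%N ltac:(lia)).
have e0 : A' = P 0%N.
  apply: (Pstar_upd HP) => //; apply: path_upd => // _.
  exact: E_down (Estar_E hE) (@mle_refl _ _ _) h1.
subst A'.
have inv : forall n, (n <= k.-1)%N -> exists X, [/\ Uprime I D n (P n) X,
     mle (P n.+1) X & forall j, (j < n)%N -> Useq I D j (P j) (P j.+1)].
  elim=> [_|n IH hn]; first by exists B'; split.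
  have [X [hU hX hJ]] := IH (ltnW hn).
  have [B2 [C [hEC hb2 hc]]] := max_edge (hpath n.+1 ltac:(lia)).
  have hF : F_of I D (Uprime I D n) (P n) (mand X B2) C by exists X, B2.
  have [Bs [hFs hles hnos]] := @maxex (mat L T) (@mle L T) (@mlt L T) (@cnt L T)
     #|{: L * 'I_T}| (@mle_trans L T) (@mle_refl L T) (fun _ _ h => h.1)
     (@cnt_lt L T) (@cnt_bd L T) (fun B => F_of I D (Uprime I D n) (P n) B C) _ hF.
  have es : Bs = P n.+1.
    apply: (Pstar_upd HP); first lia.
      by move=> x hx; apply: hles; rewrite ffunE (hX x hx) (hb2 x hx).
    move: (hFs) => [B1' [B2' [hU' hE' eBs]]].
    apply: path_upd => // [_|_].
      apply: E_down (Uprime_E hU') (@mle_refl _ _ _) _; rewrite eBs; exact: mand_l.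
    apply: E_down (Estar_E hE') _ hc; rewrite eBs; exact: mand_r.
  subst Bs.
  exists C; split => //.
    by exists (P n); split.
  move=> j hj; case: (ltnP j n) => h; first exact: hJ.
  have -> : j = n by lia.
  by exists C; split.
have [X [hU hX hJ]] := inv k.-1 (leqnn _).
have ek : X = P k.
  rewrite (ltn_predK hk) in hX.
  apply: (Pstar_upd HP) => //; apply: path_upd => // [_|]; [exact: Uprime_E hU | by rewrite ltnn].
split.
- by exists B'.
- case=> [//|j] _ hj.
  have [A [B [hEa ha hb]]] := max_edge (hpath j ltac:(lia)).
  have [B2 [C [hEb hb2 hc]]] := max_edge (hpath j.+1 ltac:(lia)).
  have eM : mand B B2 = P j.+1.
    apply: (Pstar_upd HP); first lia.
      by move=> x hx; rewrite ffunE (hb x hx) (hb2 x hx).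
    apply: path_upd => // [_|_].
      exact: E_down (Estar_E hEa) ha (@mand_l _ _ _ _).
    exact: E_down (Estar_E hEb) (@mand_r _ _ _ _) hc.
  exists B, B2; split => //; [by exists A | by exists C].
- have hE2 := hpath k.-1 ltac:(lia); rewrite (ltn_predK hk) in hE2.
  have [A [B [hEa ha hb]]] := max_edge hE2.
  have eB : B = P k.
    apply: (Pstar_upd HP) => //; apply: path_upd => // [_|]; last by rewrite ltnn.
    exact: E_down (Estar_E hEa) ha (@mle_refl _ _ _).
  by exists A; rewrite -eB.
- move=> i hi; apply: hJ; lia.
- by rewrite -ek.
Qed.
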